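(* Fix $r\ge1$. For $n\ge0$ let $$P^{(r)}_n(z_1,\dots,z_r)=\sum_{\pi} z_1^{a_1(\pi)}z_2^{a_2(\pi)}\cdots z_r^{a_r(\pi)},$$ the sum over all multiset set-partitions $\pi$ of the multiset $\{1^r,2^r,\dots,n^r\}$ (each of $1,\dots,n$ appearing exactly $r$ times); in particular $P^{(r)}_0=1$. Then for all $n\ge1$, $$P^{(r)}_n(z_1,\dots,z_r)=\mathcal{D}_r\,P^{(r)}_{n-1}(z_1,\dots,z_r),$$ where $\mathcal{D}_r$ is the operator defined in the context. Consequently the number of multiset set-partitions of $\{1^r,\dots,n^r\}$ equals $P^{(r)}_n(1,1,\dots,1)$.
   Context: A multiset set-partition of a finite multiset $M$ is a finite multiset of nonempty sets (ordinary sets, no repeated elements inside a set) whose multiset union equals $M$; the same set may occur several times in the partition, and the partition is unordered. For a multiset set-partition $\pi$ and $i\ge1$, $a_i(\pi)$ denotes the number of distinct sets that occur in $\pi$ exactly $i$ times. Definition of $\mathcal{D}_r$: Put $z_0:=1$ and $D_i:=\partial/\partial z_i$. A scenario is a tuple $T=[c_0,\lambda_1,\dots,\lambda_r]$ where $c_0\ge0$ is an integer and, for each $i$, $\lambda_i$ is an integer partition (possibly empty) all of whose parts are at most $i$, such that $c_0+|\lambda_1|+\cdots+|\lambda_r|=r$ ($|\lambda|$ = sum of parts). Write $m_j(\lambda_i)$ for the number of parts of $\lambda_i$ equal to $j$ and $\ell(\lambda_i)=\sum_j m_j(\lambda_i)$ for its number of parts. To $T$ associate the operator $$\mathcal{P}[T]\,f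 = z_{c_0}\prod_{i=1}^{r}\prod_{j=1}^{i}\frac{(z_j z_{i-j})^{m_j(\lambda_i)}}{m_j(\lambda_i)!}\;\cdot\;\Big(\prod_{i=1}^{r}D_i^{\ell(\lambda_i)}\Big)f ,$$ i.e. all differentiations are applied first and the result is then multiplied by the monomial coefficient (normal ordering). Then $\mathcal{D}_r:=\sum_{T}\mathcal{P}[T]$, the sum over all scenarios $T$. (For example $\mathcal{D}_1 = z_1 + z_1 D_1$, and $\mathcal{D}_2= z_2D_2+\tfrac12 z_1^4D_2^2+z_1^3D_1D_2+\tfrac12 z_1^2D_1^2+z_1^3D_2+z_1^2D_1+z_2$.) *)

(* Defs.v *)
From HB Require Import structures.
From mathcomp Require Import all_boot all_order all_algebra.
Set Implicit Arguments. Unset Strict Implicit. Unset Printing Implicit Defensive.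
Import Order.TTheory GRing.Theory Num.Theory.
Local Open Scope ring_scope.

(* Polynomials in z_1..z_r over Q, represented by their coefficient
   functions.  An exponent vector e : expo r has e t = exponent of z_(t+1). *)
Definition expo (r : nat) := {ffun 'I_r -> nat}.
Definition mpoly (r : nat) := expo r -> rat.

(* ---------- multiset set-partitions of {1^r,...,n^r} ----------
   The ground set {1,..,n} is 'I_n (element x <-> x+1).  A multiset of sets is
   given by its multiplicity function m : {set 'I_n} -> nat; the multiplicity
   of any nonempty set in a partition of {1^r..n^r} is <= r, hence the codomain
   'I_r.+1 loses nothing. *)
Definition msp (n r : nat) := {ffun {set 'I_n} -> 'I_r.+1}.

Definition is_msp n r (m : msp n r) : bool :=
  (nat_of_ord (m set0) == 0%N) &&
  [forall x : 'I_n, (\sum_(S : {set 'I_n} | x \in S) nat_of_ord (m S))%N == r].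

Definition a_i n r (m : msp n r) (i : nat) : nat :=
  #|[set S : {set 'I_n} | nat_of_ord (m S) == i]|.

Definition exps_of n r (m : msp n r) : expo r := [ffun k : 'I_r => a_i m k.+1].

Definition P (r n : nat) : mpoly r := fun e =>
  (#|[set m : msp n r | is_msp m && (exps_of m == e)]|)%:R.

Arguments P r n : clear implicits.

(* exponent vector of z_k  (k = 0 gives the zero vector, since z_0 = 1) *)
Definition unit_expo r (k : nat) : expo r :=
  [ffun t : 'I_r => nat_of_bool (t.+1 == k)%N].
Definition expo_add r (a b : expo r) : expo r := [ffun t => (a t + b t)%N].
Definition expo_sub r (a b : expo r) : expo r := [ffun t => (a t - b t)%N].
Definition expo_le r (a b : expo r) : bool := [forall t, (a t <= b t)%N].

Definition mulmono r (a : expo r) (f : mpoly r) : mpoly r := fun e =>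
  if expo_le a e then f (expo_sub e a) else 0.
(* partial derivative D_(k+1) = d/dz_(k+1) *)
Definition deriv r (k : 'I_r) (f : mpoly r) : mpoly r := fun e =>
  (e k).+1%:R * f (expo_add e (unit_expo r k.+1)).

(* ---------- scenarios ----------
   T = (c0, mu) with mu (i,j) = m_(j+1)(lambda_(i+1)) (0-indexed i, j);
   parts of lambda_(i+1) are at most i+1, i.e. mu (i,j) = 0 when j > i. *)
Definition scen r := ('I_r.+1 * {ffun 'I_r * 'I_r -> 'I_r.+1})%type.

Definition is_scen r (T : scen r) : bool :=
  [forall i : 'I_r, forall j : 'I_r, (i < j)%N ==> (nat_of_ord (T.2 (i, j)) == 0%N)] &&
  ((nat_of_ord T.1 + \sum_(ij : 'I_r * 'I_r) (ij.2.+1 * nat_of_ord (T.2 ij)))%N == r).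

(* exponent of z_{c0} * prod_{i,j} (z_j z_{i-j})^{m_j(lambda_i)} *)
Definition scen_mono r (T : scen r) : expo r :=
  [ffun t : 'I_r => (unit_expo r T.1 t +
     \sum_(ij : 'I_r * 'I_r) nat_of_ord (T.2 ij) *
        (unit_expo r ij.2.+1 t + unit_expo r (ij.1 - ij.2) t))%N].

Definition scen_coef r (T : scen r) : rat :=
  \prod_(ij : 'I_r * 'I_r) ((nat_of_ord (T.2 ij))`!%:R)^-1.

Definition scen_len r (T : scen r) (i : 'I_r) : nat :=
  (\sum_(j : 'I_r) nat_of_ord (T.2 (i, j)))%N.

Definition derivs r (T : scen r) (f : mpoly r) : mpoly r :=
  foldr (fun i g => iter (scen_len T i) (deriv i) g) f (enum 'I_r).

Definition PT r (T : scen r) (f : mpoly r) : mpoly r := fun e =>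
  scen_coef T * mulmono (scen_mono T) (derivs T f) e.

Definition Dop r (f : mpoly r) : mpoly r := fun e =>
  \sum_(T : scen r | is_scen T) PT T f e.

(* evaluation at z_1 = ... = z_r = 1 for polynomials whose exponents are all
   at most 2^n (true for P^(r)_n, as a_i(pi) <= number of subsets = 2^n). *)
Definition eval_ones r n (f : mpoly r) : rat :=
  \sum_(e : {ffun 'I_r -> 'I_(2 ^ n).+1}) f [ffun t => nat_of_ord (e t)].

(* Main.v *)
Require Import Defs.
From HB Require Import structures.
From mathcomp Require Import all_boot all_order all_algebra.
Set Implicit Arguments. Unset Strict Implicit. Unset Printing Implicit Defensive.
Import GRing.Theory Num.Theory.

Section Lift.
Variable k : nat.
Definition W (x : 'I_k) : 'I_k.+1 := lift ord_max x.
Definition liftS (S : {set 'I_k}) : {set 'I_k.+1} := W @: S.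
Definition liftSm (S : {set 'I_k}) : {set 'I_k.+1} := ord_max |: liftS S.
Definition proj (X : {set 'I_k.+1}) : {set 'I_k} := [set x | W x \in X].

Lemma W_inj : injective W. Proof. exact: lift_inj. Qed.
Lemma mem_liftS S x : (W x \in liftS S) = (x \in S).
Proof. by rewrite /liftS mem_imset //; exact: W_inj. Qed.
Lemma max_liftS S : (ord_max \in liftS S) = false.
Proof. apply/negbTE/imsetP => [[x _ hx]]; rewrite /W in hx; move: (neq_lift (@ord_max k) x); by rewrite -hx eqxx. Qed.
Lemma max_liftSm S : ord_max \in liftSm S.
Proof. by rewrite /liftSm setU11. Qed.
Lemma mem_liftSm S x : (W x \in liftSm S) = (x \in S).
Proof. rewrite /liftSm in_setU1 mem_liftS. case: eqP => //= h.
rewrite /W in h; by move: (neq_lift (@ord_max k) x); rewrite h eqxx. Qed.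
Lemma projK1 S : proj (liftS S) = S.
Proof. by apply/setP => x; rewrite inE mem_liftS. Qed.
Lemma projK2 S : proj (liftSm S) = S.
Proof. by apply/setP => x; rewrite inE mem_liftSm. Qed.
Lemma W_cases (y : 'I_k.+1) : y = ord_max \/ exists x, y = W x.
Proof. case: (unliftP ord_max y) => [j ->|->]; [right; by exists j | by left]. Qed.
Lemma liftS_proj (X : {set 'I_k.+1}) : ord_max \notin X -> liftS (proj X) = X.
Proof.
move=> hX; apply/setP => y; case: (W_cases y) => [->|[x ->]].
  by rewrite max_liftS (negbTE hX).
by rewrite mem_liftS inE.
Qed.
Lemma liftSm_proj (X : {set 'I_k.+1}) : ord_max \in X -> liftSm (proj X) = X.
Proof.
move=> hX; apply/setP => y; case: (W_cases y) => [->|[x ->]].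
  by rewrite max_liftSm hX.
by rewrite mem_liftSm inE.
Qed.
Lemma liftSm_neq S : liftS S != liftSm S.
Proof. apply/eqP => h; move: (max_liftSm S); by rewrite -h max_liftS. Qed.
Lemma liftS0 : liftS set0 = set0.
Proof. exact: imset0. Qed.

Lemma split_sum (F : {set 'I_k.+1} -> nat) :
  \sum_X F X = \sum_S F (liftS S) + \sum_S F (liftSm S).
Proof.
rewrite (bigID (fun X : {set 'I_k.+1} => ord_max \in X)) /= addnC; congr (_ + _).
  rewrite (reindex_onto liftS proj) /=; last by move=> X; exact: liftS_proj.
  by apply: eq_bigl => S; rewrite max_liftS projK1 eqxx.
rewrite (reindex_onto liftSm proj) /=; last by move=> X; exact: liftSm_proj.
by apply: eq_bigl => S; rewrite max_liftSm projK2 eqxx.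
Qed.
End Lift.

Lemma card_set_sum (T : finType) (p : pred T) : #|[set x | p x]| = \sum_x (p x : nat).
Proof. rewrite -sum1_card big_mkcond /=; apply: eq_bigr => x _; rewrite inE; by case: (p x). Qed.
Lemma eq_inord_pred r' (i : 'I_r'.+1) x : 0 < x -> x <= r'.+1 -> (x == i.+1) = (i == inord x.-1).
Proof.
move=> x0 xr; rewrite -val_eqE /= inordK; last by rewrite prednK.
by rewrite -{1}(prednK x0) eqSS eq_sym.
Qed.

Lemma addn_swap3 a S b : a + S + b = b + S + a.
Proof. by rewrite addnAC [RHS]addnAC [a + b]addnC. Qed.

Section Multi.
Variables (U : finType) (r' : nat) (m : U -> nat).
Local Notation r := r'.+1.
Hypothesis hm : forall u, m u <= r.

Definition cnt (J : U -> nat) (ij : 'I_r * 'I_r) : nat :=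
  #|[set u | (m u == ij.1.+1) && (J u == ij.2.+1)]|.

Lemma sum_cnt (J : U -> nat) (hJ : forall u, J u <= m u) (g : 'I_r * 'I_r -> nat) :
  \sum_ij cnt J ij * g ij =
  \sum_u (if J u == 0 then 0 else g (inord (m u).-1, inord (J u).-1)).
Proof.
under eq_bigr do rewrite /cnt card_set_sum big_distrl /=.
rewrite exchange_big /=; apply: eq_bigr => u _.
case: eqP => [J0|/eqP Jn0].
  by rewrite big1 // => ij _; rewrite J0 andbF.
have Jpos : 0 < J u by rewrite lt0n.
have mpos : 0 < m u by apply: leq_trans (hJ u).
have Jr : J u <= r by apply: leq_trans (hm u).
rewrite (bigD1 (inord (m u).-1, inord (J u).-1)) //= big1.
  by rewrite !(eq_inord_pred _ mpos (hm u)) !(eq_inord_pred _ Jpos Jr) !eqxx mul1n addn0.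
case=> i j /=; rewrite xpair_eqE => /negbTE hn.
by rewrite (eq_inord_pred _ mpos (hm u)) (eq_inord_pred _ Jpos Jr) hn.
Qed.

Lemma sum_len (J : U -> nat) (hJ : forall u, J u <= m u) (t : 'I_r) :
  \sum_j cnt J (t, j) = \sum_u ((m u == t.+1) && (J u != 0)).
Proof.
under eq_bigr do rewrite /cnt card_set_sum.
rewrite exchange_big /=; apply: eq_bigr => u _.
case: (m u =P t.+1) => /= hmu; last by rewrite big1.
case: eqP => [J0|/eqP Jn0].
  by rewrite big1 // => j _; rewrite J0.
have Jpos : 0 < J u by rewrite lt0n.
have Jr : J u <= r by apply: leq_trans (hm u).
rewrite (bigD1 (inord (J u).-1)) //= big1.
  by rewrite (eq_inord_pred _ Jpos Jr) eqxx.
by move=> j /negbTE hn; rewrite (eq_inord_pred _ Jpos Jr) hn.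
Qed.

Definition good (mu : 'I_r * 'I_r -> nat) (J : {ffun U -> 'I_r.+1}) : bool :=
  [forall u, J u <= m u] && [forall ij, cnt (fun u => J u) ij == mu ij].
Definition aa (i : 'I_r) := #|[set u | m u == i.+1]|.
Definition len (mu : 'I_r * 'I_r -> nat) (i : 'I_r) := \sum_j mu (i, j).

Definition Qs mu (ij0 : 'I_r * 'I_r) := [set p : {ffun U -> 'I_r.+1} * U | good mu p.1 &&
   (m p.2 == ij0.1.+1) && (p.1 p.2 == ij0.2.+1 :> nat)].
Definition Q0s mu (i0 : 'I_r) := [set p : {ffun U -> 'I_r.+1} * U | good mu p.1 &&
   (m p.2 == i0.+1) && (p.1 p.2 == 0 :> nat)].

Lemma card_goodmul mu (ij0 : 'I_r * 'I_r) :
  #|Qs mu ij0| = #|[set J | good mu J]| * mu ij0.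
Proof.
rewrite /Qs [LHS]card_set_sum.
transitivity (\sum_(J : {ffun U -> 'I_r.+1}) \sum_u
   (good mu J && (m u == ij0.1.+1) && (J u == ij0.2.+1 :> nat) : nat)); first by rewrite pair_bigA.
rewrite -sum_nat_const [RHS]big_mkcond; apply: eq_bigr => J _; rewrite inE.
case g: (good mu J) => /=; last by rewrite big1.
move/andP: g => [_ /forallP /(_ ij0) /eqP <-].
by rewrite /cnt card_set_sum.
Qed.

Lemma card_good0 mu (i0 : 'I_r) :
  #|Q0s mu i0| = #|[set J | good mu J]| * (aa i0 - len mu i0).
Proof.
rewrite /Q0s [LHS]card_set_sum.
transitivity (\sum_(J : {ffun U -> 'I_r.+1}) \sum_u
   (good mu J && (m u == i0.+1) && (J u == 0 :> nat) : nat)); first by rewrite pair_bigA.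
rewrite -sum_nat_const [RHS]big_mkcond; apply: eq_bigr => J _; rewrite inE.
case g: (good mu J) => /=; last by rewrite big1.
move/andP: g => [/forallP hle /forallP hc].
have -> : len mu i0 = \sum_u ((m u == i0.+1) && (J u != 0 :> nat)).
  rewrite -sum_len // /len; apply: eq_bigr => j _; by move/eqP: (hc (i0, j)).
have -> : aa i0 = \sum_u ((m u == i0.+1) && (J u == 0 :> nat)) +
                  \sum_u ((m u == i0.+1) && (J u != 0 :> nat)).
  rewrite -big_split /aa card_set_sum; apply: eq_bigr => u _.
  by case: (m u == i0.+1); case: (J u == 0 :> nat).
by rewrite addnK.
Qed.

Definition upd (J : {ffun U -> 'I_r.+1}) (u : U) (v : 'I_r.+1) : {ffun U -> 'I_r.+1} :=
  [ffun w => if w == u then v else J w].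

Lemma cnt_upd J u v ij :
  cnt (fun w => upd J u v w) ij + ((m u == ij.1.+1) && (J u == ij.2.+1 :> nat)) =
  cnt (fun w => J w) ij + ((m u == ij.1.+1) && (v == ij.2.+1 :> nat)).
Proof.
rewrite /cnt !card_set_sum (bigD1 u) //= [in RHS](bigD1 u) //= ffunE eqxx.
rewrite (eq_bigr (fun w => ((m w == ij.1.+1) && (J w == ij.2.+1 :> nat) : nat))); last first.
  by move=> w /negbTE hw; rewrite ffunE hw.
by rewrite addn_swap3.
Qed.

Lemma pair_eqS (i j i0 j0 : 'I_r) :
  ((i0.+1 == i.+1) && (j0.+1 == j.+1)) = ((i, j) == (i0, j0)).
Proof. by rewrite !eqSS xpair_eqE (eq_sym i) (eq_sym j). Qed.

Lemma card_bij mu mu' (i0 j0 : 'I_r) (hji : j0 <= i0) (hpos : 0 < mu (i0, j0))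
  (hmu' : forall ij, mu' ij = mu ij - (ij == (i0, j0))) :
  #|Qs mu (i0, j0)| = #|Q0s mu' i0|.
Proof.
pose f := fun p : {ffun U -> 'I_r.+1} * U => (upd p.1 p.2 ord0, p.2).
pose g := fun p : {ffun U -> 'I_r.+1} * U => (upd p.1 p.2 (inord j0.+1), p.2).
have j0r : j0.+1 < r.+1 by rewrite ltnS ltn_ord.
have fQ : forall p, p \in Qs mu (i0, j0) -> f p \in Q0s mu' i0.
  case=> J u; rewrite !inE /= => /andP [/andP [gJ hmu] hJu].
  rewrite hmu ffunE eqxx /= eqxx andbT /good.
  move: gJ; rewrite /good => /andP [/forallP hle /forallP hc].
  have -> : [forall w, upd J u ord0 w <= m w].
    by apply/forallP => w; rewrite ffunE; case: (w == u) => //; exact: hle.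
  rewrite andbT /=; apply/forallP => -[i j]; have := cnt_upd J u ord0 (i, j).
  rewrite hmu' -(eqP (hc (i, j))) (eqP hmu) (eqP hJu) /= pair_eqS andbF addn0 => <-.
  by rewrite addnK.
have gQ : forall p, p \in Q0s mu' i0 -> g p \in Qs mu (i0, j0).
  case=> J u; rewrite !inE /= => /andP [/andP [gJ hmu] hJu].
  rewrite hmu ffunE eqxx inordK // /= eqxx andbT /good.
  move: gJ; rewrite /good => /andP [/forallP hle /forallP hc].
  have -> : [forall w, upd J u (inord j0.+1) w <= m w].
    apply/forallP => w; rewrite ffunE; case: eqP => [->|_]; last exact: hle.
    by rewrite inordK // (eqP hmu) ltnS.
  rewrite ?andbT /=; apply/forallP => -[i j]; have := cnt_upd J u (inord j0.+1) (i, j).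
  rewrite (eqP hmu) (eqP hJu) inordK // /= pair_eqS andbF addn0 (eqP (hc (i, j))) => h.
  apply/eqP; move: h; rewrite hmu'; case: eqP => [[-> ->]|_]; last by rewrite !subn0 addn0.
  by rewrite subn1 addn1 prednK.
have gf : {in Qs mu (i0, j0), cancel f g}.
  case=> J u; rewrite inE => /andP [_ hJu]; rewrite /f /g /=; congr pair.
  apply/ffunP => w; rewrite !ffunE; case: eqP => // ->; apply: val_inj.
  by rewrite /= inordK // (eqP hJu).
have fg : {in Q0s mu' i0, cancel g f}.
  case=> J u; rewrite inE => /andP [_ hJu]; rewrite /f /g /=; congr pair.
  apply/ffunP => w; rewrite !ffunE; case: eqP => // ->; apply: val_inj.
  by rewrite /= (eqP hJu).
have E : f @: Qs mu (i0, j0) = Q0s mu' i0.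
  apply/setP => p; apply/imsetP/idP => [[q hq ->]|hp]; first exact: fQ.
  by exists (g p); [exact: gQ | rewrite fg].
by rewrite -E card_in_imset //; exact: can_in_inj gf.
Qed.

Theorem multi mu : (forall i j : 'I_r, i < j -> mu (i, j) = 0) ->
  #|[set J | good mu J]| * \prod_ij (mu ij)`! = \prod_i (aa i) ^_ (len mu i).
Proof.
move: {2}(\sum_ij mu ij) (erefl (\sum_ij mu ij)) => s.
elim: s mu => [|s IH] mu hs hmu.
  have mu0 : forall ij, mu ij = 0.
    move=> ij; move: hs; rewrite (bigD1 ij) //= => /esym/eqP.
    by rewrite eq_sym addn_eq0 => /andP [/eqP -> _].
  have -> : #|[set J | good mu J]| = 1.
    apply/eqP/cards1P; exists [ffun _ => ord0]; apply/setP => J; rewrite !inE.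
    apply/idP/eqP.
      rewrite /good => /andP [/forallP hle /forallP hc]; apply/ffunP => u.
      rewrite ffunE; apply: val_inj => /=; apply/eqP; apply/negPn/negP => Jn0.
      have Jpos : 0 < J u by rewrite lt0n.
      have mpos : 0 < m u := leq_trans Jpos (hle u).
      have Jr : J u <= r := leq_trans (hle u) (hm u).
      move: (hc (inord (m u).-1, inord (J u).-1)); rewrite mu0 /cnt cards_eq0.
      move=> /eqP/setP/(_ u); rewrite !inE /=.
      by rewrite (eq_inord_pred _ mpos (hm u)) (eq_inord_pred _ Jpos Jr) !eqxx.
    move=> ->; rewrite /good.
    have -> : [forall u, [ffun _ => (ord0 : 'I_r.+1)] u <= m u].
      by apply/forallP => u; rewrite ffunE.
    apply/forallP => ij; rewrite mu0 /cnt cards_eq0; apply/eqP/setP => u.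
    by rewrite !inE ffunE andbF.
  rewrite big1 ?mul1n; last by move=> ij _; rewrite mu0.
  by rewrite big1 // => i _; rewrite /len big1 ?ffactn0 // => j _; rewrite mu0.
have [ij0 hij0] : exists ij0, 0 < mu ij0.
  case: (pickP (fun ij => 0 < mu ij)) => [ij0 h|h]; first by exists ij0.
  have : \sum_ij mu ij = 0.
    by apply: big1 => ij _; move: (h ij) => /=; rewrite lt0n => /negbFE/eqP.
  by rewrite hs.
case: ij0 hij0 => i0 j0 hij0.
have hji : j0 <= i0.
  by rewrite leqNgt; apply/negP => h; rewrite hmu in hij0.
pose mu' := fun ij => mu ij - (ij == (i0, j0)).
have hmu'E : forall ij, mu' ij = mu ij - (ij == (i0, j0)) by [].
have hs' : \sum_ij mu' ij = s.
  have e1 : \sum_(ij | ij != (i0, j0)) mu' ij = \sum_(ij | ij != (i0, j0)) mu ij.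
    by apply: eq_bigr => ij /negbTE h; rewrite /mu' h subn0.
  move: hs; rewrite (bigD1 (i0, j0)) //= [in X in _ -> X](bigD1 (i0, j0)) //= e1 => hs.
  apply: succn_inj; rewrite -hs /mu' eqxx subn1 -addSn prednK //.
have hmu' : forall i j : 'I_r, i < j -> mu' (i, j) = 0.
  by move=> i j h; rewrite /mu' hmu.
have IHm := IH mu' hs' hmu'.
have key : #|[set J | good mu J]| * mu (i0, j0) =
           #|[set J | good mu' J]| * (aa i0 - len mu' i0).
  by rewrite -card_goodmul -card_good0 (card_bij hji hij0 hmu'E).
have hf : (mu (i0, j0))`! = mu (i0, j0) * (mu' (i0, j0))`!.
  rewrite /mu' eqxx subn1; case: (mu (i0, j0)) hij0 => // c _; by rewrite factS.
have hR : \prod_(ij | ij != (i0, j0)) (mu ij)`! = \prod_(ij | ij != (i0, j0)) (mu' ij)`!.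
  by apply: eq_bigr => ij /negbTE h; rewrite /mu' h subn0.
have L : #|[set J | good mu J]| * \prod_ij (mu ij)`! =
         (aa i0 - len mu' i0) * (#|[set J | good mu' J]| * \prod_ij (mu' ij)`!).
  rewrite (bigD1 (i0, j0)) //= [in RHS](bigD1 (i0, j0)) //= hf hR.
  rewrite -mulnA mulnA key.
  by rewrite [#|_| * (aa i0 - _)]mulnC -mulnA.
have hl0 : len mu i0 = (len mu' i0).+1.
  have e : \sum_(j | j != j0) mu' (i0, j) = \sum_(j | j != j0) mu (i0, j).
    by apply: eq_bigr => j hj; rewrite /mu' xpair_eqE eqxx (negbTE hj) subn0.
  rewrite /len (bigD1 j0) //= [in RHS](bigD1 j0) //= e /mu' eqxx subn1 -addSn prednK //.
have hlo : \prod_(i | i != i0) (aa i) ^_ (len mu i) = \prod_(i | i != i0) (aa i) ^_ (len mu' i).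
  apply: eq_bigr => i hi; congr (_ ^_ _); apply: eq_bigr => j _.
  by rewrite /mu' xpair_eqE (negbTE hi) subn0.
rewrite L IHm (bigD1 i0) //= [in RHS](bigD1 i0) //= hl0 ffactnSr hlo.
by rewrite mulnA [(aa i0 - _) * _]mulnC.
Qed.

End Multi.

Section Build.
Variables (k r' : nat).
Local Notation r := r'.+1.
Local Notation Jt := {ffun {set 'I_k} -> 'I_r.+1}.

Definition sumJ (J : Jt) := \sum_S (J S : nat).
Definition c0of (J : Jt) : 'I_r.+1 := inord (r - sumJ J).
Definition build (p : msp k r * Jt) : msp k.+1 r :=
  [ffun X : {set 'I_k.+1} => if ord_max \in X then (if proj X == set0 then c0of p.2 else p.2 (proj X))
             else inord (p.1 (proj X) - p.2 (proj X))].
Definition inD (p : msp k r * Jt) : bool :=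
  is_msp p.1 && [forall S, p.2 S <= p.1 S] && (sumJ p.2 <= r).

Lemma build_liftS p S : (build p (liftS S) : nat) = p.1 S - p.2 S.
Proof. by rewrite ffunE max_liftS projK1 inordK // ltnS; apply: leq_trans (leq_subr _ _) (leq_ord _). Qed.

Lemma build_liftSm p S :
  (build p (liftSm S) : nat) = if S == set0 then r - sumJ p.2 else p.2 S.
Proof. by rewrite ffunE max_liftSm projK2; case: eqP => // _; rewrite inordK // ltnS leq_subr. Qed.

Lemma inD_J0 p : inD p -> p.2 set0 = 0 :> nat.
Proof.
case/andP => /andP [/andP [/eqP h0 _] /forallP hle] _.
by apply/eqP; rewrite -leqn0 -h0 hle.
Qed.

Lemma sumJ_ne0 (J : Jt) : J set0 = 0 :> nat -> \sum_(S | S != set0) (J S : nat) = sumJ J.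
Proof. by move=> h; rewrite /sumJ [in RHS](bigD1 set0) //= h. Qed.

Lemma is_msp_build p : inD p -> is_msp (build p).
Proof.
move=> hp; have J0 := inD_J0 hp.
move: hp => /andP [/andP [/andP [/eqP m0 /forallP hm] /forallP hle] hs].
apply/andP; split.
  by rewrite -(liftS0 k) build_liftS m0.
apply/forallP => y; rewrite big_mkcond split_sum /=.
case: (W_cases y) => [->|[x ->]].
  rewrite big1; last by move=> S _; rewrite max_liftS.
  rewrite add0n (eq_bigr (fun S : {set 'I_k} => if S == set0 then r - sumJ p.2 else p.2 S)); last first.
    by move=> S _; rewrite max_liftSm build_liftSm.
  by rewrite (bigD1 set0) //= eqxx (eq_bigr (fun S : {set 'I_k} => p.2 S : nat)) ?sumJ_ne0 ?subnK //;
    move=> S /negbTE ->.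
rewrite (eq_bigr (fun S : {set 'I_k} => if x \in S then p.1 S - p.2 S else 0)); last first.
  by move=> S _; rewrite mem_liftS build_liftS.
rewrite [X in _ + X](eq_bigr (fun S : {set 'I_k} => if x \in S then (p.2 S : nat) else 0)); last first.
  move=> S _; rewrite mem_liftSm build_liftSm; case hx: (x \in S) => //.
  by case: eqP => // h; rewrite h inE in hx.
rewrite -big_split /=; apply/eqP.
transitivity (\sum_(S : {set 'I_k} | x \in S) (p.1 S : nat)); last exact/eqP/hm.
rewrite [in RHS]big_mkcond /=.
apply/eq_bigr => S _; case: (x \in S) => //; by rewrite subnK.
Qed.

Definition restr (m' : msp k.+1 r) : msp k r * Jt :=
  ([ffun S : {set 'I_k} => if S == set0 then ord0 else inord (m' (liftS S) + m' (liftSm S))],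
   [ffun S : {set 'I_k} => if S == set0 then ord0 else m' (liftSm S)]).

Lemma msp_bound (m' : msp k.+1 r) S : is_msp m' -> S != set0 ->
  m' (liftS S) + m' (liftSm S) <= r.
Proof.
move=> /andP [_ /forallP hm] /set0Pn [x hx].
apply: (leq_trans _ (eq_leq (eqP (hm (W x))))).
rewrite (bigD1 (liftS S)) ?mem_liftS //= (bigD1 (liftSm S)) /=.
  by rewrite addnA leq_addr.
by rewrite mem_liftSm hx eq_sym liftSm_neq.
Qed.

Lemma restr1 (m' : msp k.+1 r) S : is_msp m' -> S != set0 ->
  ((restr m').1 S : nat) = m' (liftS S) + m' (liftSm S).
Proof. by move=> hm hS; rewrite ffunE (negbTE hS) inordK // ltnS msp_bound. Qed.

Lemma restr_sum (m' : msp k.+1 r) : is_msp m' ->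
  sumJ (restr m').2 + m' (liftSm set0) = r.
Proof.
move=> /andP [_ /forallP hm].
transitivity (\sum_(X : {set 'I_k.+1} | ord_max \in X) (m' X : nat)); last exact/eqP/hm.
rewrite big_mkcond split_sum /=.
rewrite big1 ?add0n; last by move=> S _; rewrite max_liftS.
rewrite (bigD1 set0) //= max_liftSm addnC; congr (_ + _).
rewrite /sumJ (bigD1 set0) //= ffunE eqxx add0n.
by apply: eq_bigr => S /negbTE hS; rewrite ffunE hS max_liftSm.
Qed.

Lemma restr_inD (m' : msp k.+1 r) : is_msp m' -> inD (restr m').
Proof.
move=> hm; have hs := restr_sum hm.
apply/andP; split; last exact: leq_trans (leq_addr _ _) (eq_leq hs).
apply/andP; split.
  apply/andP; split; first by rewrite ffunE eqxx.
  apply/forallP => x.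
  transitivity (\sum_(S : {set 'I_k} | x \in S) (m' (liftS S) + m' (liftSm S)) == r).
    congr (_ == _); apply: eq_bigr => S hx; apply: restr1 => //.
    by apply/set0Pn; exists x.
  move: hm => /andP [_ /forallP hm]; apply/eqP.
  transitivity (\sum_(X : {set 'I_k.+1} | W x \in X) (m' X : nat)); last exact/eqP/hm.
  rewrite [in RHS]big_mkcond split_sum /=.
  rewrite -big_split big_mkcond /=; apply/eq_bigr => S _.
  by rewrite mem_liftS mem_liftSm; case: (x \in S).
apply/forallP => S; case: (S =P set0) => [->|/eqP hS]; first by rewrite !ffunE eqxx.
by rewrite restr1 // ffunE (negbTE hS) leq_addl.
Qed.

Lemma restr_build (m' : msp k.+1 r) : is_msp m' -> build (restr m') = m'.
Proof.
move=> hm; have hs := restr_sum hm.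
apply/ffunP => X; apply: val_inj; rewrite ffunE /=.
case hX: (ord_max \in X).
  have eX := liftSm_proj hX.
  case: eqP => [h0|/eqP h0].
    have hs' : r - sumJ (restr m').2 = m' (liftSm set0).
      apply/eqP; rewrite -(eqn_add2l (sumJ (restr m').2)) subnKC; first by rewrite hs.
      exact: leq_trans (leq_addr _ _) (eq_leq hs).
    rewrite /c0of inordK ?ltnS ?leq_subr // hs'.
    by rewrite -h0 eX.
  by rewrite ffunE (negbTE h0) eX.
have eX := liftS_proj (negbT hX).
case: (proj X =P set0) => [h0|/eqP h0].
  rewrite !ffunE h0 eqxx /= inordK // -eX h0 liftS0.
  by move: hm => /andP [/eqP -> _].
rewrite restr1 // ffunE (negbTE h0) addnK inordK ?eX //.
Qed.

Lemma build_inj : {in [set p | inD p] &, injective build}.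
Proof.
move=> p q; rewrite !inE => hp hq e.
have J0p := inD_J0 hp; have J0q := inD_J0 hq.
move: hp hq => /andP [/andP [/andP [/eqP m0p _] /forallP hlep] _].
move=> /andP [/andP [/andP [/eqP m0q _] /forallP hleq] _].
have e2 : p.2 = q.2.
  apply/ffunP => S; apply: val_inj => /=.
  case: (S =P set0) => [->|/eqP hS]; first by rewrite J0p J0q.
  by move: (build_liftSm p S) (build_liftSm q S); rewrite e (negbTE hS) => -> ->.
have e1 : p.1 = q.1.
  apply/ffunP => S; apply: val_inj => /=.
  move: (build_liftS p S) (build_liftS q S); rewrite e => -> h.
  by rewrite -(subnK (hlep S)) h e2 subnK // -e2.
by case: p q e1 e2 {e hlep hleq J0p J0q m0p m0q} => [? ?] [? ?] /= -> ->.
Qed.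

Lemma count_build (Pr : pred (msp k.+1 r)) :
  \sum_(m' | is_msp m') (Pr m' : nat) = \sum_(p | inD p) (Pr (build p) : nat).
Proof.
rewrite (eq_bigl (mem (build @: [set p | inD p]))); last first.
  move=> m'; apply/idP/imsetP => [hm|[p hp ->]].
    by exists (restr m'); [rewrite inE restr_inD | rewrite restr_build].
  by rewrite inE in hp; rewrite /= is_msp_build.
rewrite big_imset /=; last exact: build_inj.
by apply: eq_bigl => p; rewrite inE.
Qed.

Definition mF (p : msp k r * Jt) := fun S : {set 'I_k} => (p.1 S : nat).
Definition jF (p : msp k r * Jt) := fun S : {set 'I_k} => (p.2 S : nat).
Lemma mF_le p S : mF p S <= r. Proof. exact: leq_ord. Qed.
Lemma jF_le p : inD p -> forall S, jF p S <= mF p S.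
Proof. by case/andP => /andP [_ /forallP h] _. Qed.

Definition prof (p : msp k r * Jt) : scen r :=
  (c0of p.2, [ffun ij : 'I_r * 'I_r => inord (cnt (mF p) (jF p) ij)]).

Lemma cnt_le p : inD p -> forall ij : 'I_r * 'I_r, cnt (mF p) (jF p) ij <= r.
Proof.
move=> hp ij; apply: leq_trans _ (let: conj _ h := andP hp in h).
rewrite /cnt card_set_sum /sumJ; apply: leq_sum => S _.
case/boolP: (_ && _) => //= /andP [_ /eqP h]; by move: h; rewrite /jF => ->.
Qed.

Lemma prof2 p (ij : 'I_r * 'I_r) : inD p -> ((prof p).2 ij : nat) = cnt (mF p) (jF p) ij.
Proof. by move=> hp; rewrite ffunE inordK // ltnS cnt_le. Qed.

Lemma sumJ_cnt p : inD p ->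
  \sum_(ij : 'I_r * 'I_r) ij.2.+1 * ((prof p).2 ij : nat) = sumJ p.2.
Proof.
move=> hp; rewrite (eq_bigr (fun ij => cnt (mF p) (jF p) ij * ij.2.+1)); last first.
  by move=> ij _; rewrite prof2 // mulnC.
rewrite (sum_cnt (@mF_le p) (jF_le hp)) /sumJ; apply: eq_bigr => S _.
rewrite /jF; case: eqP => [-> //|/eqP h].
have Jr : (p.2 S : nat) <= r by apply: leq_trans (jF_le hp S) (mF_le p S).
by rewrite inordK ?prednK ?lt0n // (leq_trans _ Jr) // prednK ?lt0n.
Qed.

Lemma prof_scen p : inD p -> is_scen (prof p).
Proof.
move=> hp; apply/andP; split.
  apply/forallP => i; apply/forallP => j; apply/implyP => hij.
  rewrite prof2 // /cnt cards_eq0; apply/eqP/setP => S; rewrite !inE /=.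
  apply/negbTE/negP => /andP [/eqP hm /eqP hj]; move: (jF_le hp S); rewrite hm hj ltnS.
  by rewrite leqNgt hij.
rewrite sumJ_cnt // /= /c0of inordK ?ltnS ?leq_subr // subnK //.
by case/andP: hp.
Qed.

Definition newe (m : msp k r) (T : scen r) : expo r :=
  [ffun t => exps_of m t - scen_len T t + scen_mono T t].

Lemma arith5 A B c C L : A + B + (c + C) = A + L - L + (c + (C + B)).
Proof. by rewrite addnK -addnA; congr (A + _); rewrite addnCA [B + C]addnC. Qed.

Lemma exps_build p : inD p -> exps_of (build p) = newe p.1 (prof p).
Proof.
move=> hp; have J0 := inD_J0 hp.
have hle := jF_le hp.
apply/ffunP => t; rewrite /newe [in RHS]ffunE.
have -> : scen_len (prof p) t = \sum_S ((mF p S == t.+1) && (jF p S != 0)).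
  rewrite /scen_len -(sum_len (@mF_le p) hle); apply: eq_bigr => j _; exact: prof2.
have -> : scen_mono (prof p) t = (t.+1 == r - sumJ p.2) +
     (\sum_S (jF p S == t.+1) + \sum_S ((jF p S != 0) && (mF p S - jF p S == t.+1))).
  rewrite /scen_mono ffunE /= ffunE /c0of inordK ?ltnS ?leq_subr //; congr (_ + _).
  rewrite (eq_bigr (fun ij => cnt (mF p) (jF p) ij *
      (unit_expo r ij.2.+1 t + unit_expo r (ij.1 - ij.2) t))); last first.
    by move=> ij _; rewrite prof2.
  rewrite (sum_cnt (@mF_le p) hle) -big_split /=; apply: eq_bigr => S _.
  case: eqP => [-> //|/eqP h]; rewrite !ffunE.
  have mpos : 0 < mF p S by apply: leq_trans (hle S); rewrite lt0n.
  have Jr : jF p S <= r by apply: leq_trans (hle S) (mF_le p S).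
  have Jpos : 0 < jF p S by rewrite lt0n.
  have e1 : ((inord (jF p S).-1 : 'I_r) : nat) = (jF p S).-1.
    by rewrite inordK // prednK.
  have e2 : ((inord (mF p S).-1 : 'I_r) : nat) = (mF p S).-1.
    by rewrite inordK // prednK // mF_le.
  rewrite /= e1 e2 prednK //.
  have e3 : (mF p S).-1 - (jF p S).-1 = mF p S - jF p S by rewrite -subSS !prednK.
  by rewrite e3 !(eq_sym t.+1).
rewrite /exps_of !ffunE /a_i !card_set_sum split_sum.
rewrite (eq_bigr (fun S => (mF p S - jF p S == t.+1) : nat)); last first.
  by move=> S _; rewrite build_liftS.
rewrite [X in _ + X = _](eq_bigr (fun S =>
    ((if S == set0 then r - sumJ p.2 else jF p S) == t.+1) : nat)); last first.
  by move=> S _; rewrite build_liftSm.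
have hA : \sum_S (mF p S - jF p S == t.+1) =
   \sum_S ((mF p S == t.+1) && (jF p S == 0)) +
   \sum_S ((jF p S != 0) && (mF p S - jF p S == t.+1)).
  rewrite -big_split; apply: eq_bigr => S _ /=.
  case: (jF p S =P 0) => [->|/eqP h] /=; rewrite ?subn0 ?andbT ?addn0 //. by rewrite andbF.
have hE : \sum_S ((p.1 S : nat) == t.+1) =
   \sum_S ((mF p S == t.+1) && (jF p S == 0)) +
   \sum_S ((mF p S == t.+1) && (jF p S != 0)).
  rewrite -big_split; apply: eq_bigr => S _ /=; rewrite /mF.
  by case: (_ == t.+1); case: (jF p S == 0).
have hC : \sum_S ((if S == set0 then r - sumJ p.2 else jF p S) == t.+1) =
   (t.+1 == r - sumJ p.2) + \sum_S (jF p S == t.+1).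
  rewrite (bigD1 set0) //= [in RHS](bigD1 set0) //= eqxx eq_sym. have -> : (jF p set0 == t.+1) = false by rewrite /jF J0. rewrite add0n.
  by congr (_ + _); apply: eq_bigr => S /negbTE ->.
by rewrite hA hC hE; apply: arith5.
Qed.

Lemma sum_cntJ (m : msp k r) (J : Jt) : [forall S, J S <= m S] ->
  \sum_(ij : 'I_r * 'I_r) cnt (fun S => (m S : nat)) (fun S => (J S : nat)) ij * ij.2.+1
  = sumJ J.
Proof.
move=> /forallP hle.
rewrite (sum_cnt (fun S => leq_ord (m S)) hle) /sumJ; apply: eq_bigr => S _.
case: eqP => [-> //|/eqP h].
have Jr : (J S : nat) <= r by apply: leq_trans (hle S) (leq_ord _).
by rewrite inordK ?prednK ?lt0n // (leq_trans _ Jr) // prednK ?lt0n.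
Qed.

Lemma fiber_card (m : msp k r) (T : scen r) : is_msp m -> is_scen T ->
  #|[set J : Jt | [forall S, J S <= m S] && (sumJ J <= r) && (prof (m, J) == T)]| =
  #|[set J : Jt | good (fun S => (m S : nat)) (fun ij => (T.2 ij : nat)) J]|.
Proof.
move=> hm hT; apply: eq_card => J; rewrite !inE; apply/idP/idP.
  case/andP => /andP [hle hs] /eqP hT'.
  have hp : inD (m, J) by rewrite /inD /= hm hle hs.
  rewrite /good hle /=; apply/forallP => ij; rewrite -hT'; apply/eqP.
  by rewrite prof2.
move=> /andP [hle /forallP hc].
have hs : sumJ J + T.1 = r.
  case/andP: hT => _ /eqP h; apply: etrans _ h; rewrite addnC; congr (_ + _).
  rewrite -(sum_cntJ hle); apply: eq_bigr => ij _; rewrite mulnC; congr (_ * _).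
  exact/eqP/(hc ij).
have hsr : sumJ J <= r by apply: leq_trans (leq_addr T.1 _) (eq_leq hs).
rewrite hle hsr /=; apply/eqP.
case: T hT hc hs => c0 mu hT hc hs; rewrite /prof; congr pair.
  apply: val_inj; rewrite /c0of /= inordK ?ltnS ?leq_subr //; apply/eqP.
  by rewrite -(eqn_add2l (sumJ J)) subnKC // hs.
apply/ffunP => ij; rewrite ffunE; apply: val_inj; rewrite /= inordK.
  exact/eqP/(hc ij).
by rewrite (eqP (hc ij)) ltn_ord.
Qed.

End Build.

Section Deriv.
Local Open Scope ring_scope.
Variable r : nat.

Definition shift (e : expo r) (i : 'I_r) (l : nat) : expo r :=
  [ffun t => (e t + (if t == i then l else 0))%N].

Lemma iter_deriv (i : 'I_r) l (f : mpoly r) (e : expo r) :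
  iter l (Defs.deriv i) f e = (((e i + l) ^_ l)%N)%:R * f (shift e i l).
Proof.
elim: l f e => [|l IH] f e.
  rewrite /= ffactn0 mul1r; congr f; apply/ffunP => t; rewrite ffunE.
  by case: (t == i); rewrite addn0.
rewrite iterSr IH /Defs.deriv ffunE eqxx mulrA -natrM.
congr (_ * f _).
  by rewrite addnS ffactnS mulnC.
apply/ffunP => t; rewrite !ffunE.
have -> : (t.+1 == i.+1) = (t == i) by [].
case: (t == i) => /=.
  by rewrite addn1 addnS.
by rewrite !addn0.
Qed.

Lemma foldr_deriv (L : 'I_r -> nat) (s : seq 'I_r) (f : mpoly r) (e : expo r) : uniq s ->
  foldr (fun i g => iter (L i) (Defs.deriv i) g) f s e =
  ((\prod_(i <- s) ((e i + L i) ^_ (L i)))%N)%:R * f (expo_add e [ffun t => if t \in s then L t else 0%N]).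
Proof.
elim: s e => [|i s IH] e /=.
  move=> _; rewrite big_nil mul1r; congr f; apply/ffunP => t; rewrite !ffunE; by rewrite addn0.
case/andP => his us; rewrite iter_deriv IH // big_cons natrM mulrA.
have e1 : (\prod_(j <- s) ((shift e i (L i) j + L j) ^_ (L j)) =
          \prod_(j <- s) ((e j + L j) ^_ (L j)))%N.
  apply: eq_big_seq => j hj; rewrite ffunE.
  have -> : (j == i) = false by apply/eqP => h; move: his; by rewrite -h hj.
  by rewrite addn0.
have e2 : expo_add (shift e i (L i)) [ffun t => if t \in s then L t else 0%N] =
          expo_add e [ffun t => if t \in i :: s then L t else 0%N].
  apply/ffunP => t; rewrite !ffunE in_cons; case: (t =P i) => [->|_] /=.
    by rewrite (negbTE his) addn0.
  by rewrite addn0.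
by rewrite e1 e2.
Qed.

Lemma derivs_eq (T : scen r) (f : mpoly r) (e : expo r) :
  derivs T f e = ((\prod_i ((e i + scen_len T i) ^_ (scen_len T i)))%N)%:R *
                 f (expo_add e [ffun t => scen_len T t]).
Proof.
rewrite /derivs foldr_deriv ?enum_uniq //; congr (_%:R * f _).
  by rewrite big_enum.
by apply/ffunP => t; rewrite !ffunE mem_enum.
Qed.

End Deriv.

Section Final.
Variables (r' : nat).
Local Notation r := r'.+1.

Lemma per_mT (a M e : expo r) (Lf : 'I_r -> nat) :
  ((\prod_i (a i) ^_ (Lf i)) *
     ([ffun t => a t - Lf t + M t] == e : nat))%N =
  if expo_le M e then
    ((\prod_i ((expo_sub e M i + Lf i) ^_ (Lf i))) *
     (a == expo_add (expo_sub e M) [ffun t => Lf t] : nat))%N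
  else 0%N.
Proof.
have key : [ffun t => a t - Lf t + M t] == e -> [forall i, Lf i <= a i] ->
    expo_le M e && (a == expo_add (expo_sub e M) [ffun t => Lf t]).
  move/eqP => hn /forallP hall.
  have ht : forall t, a t - Lf t + M t = e t.
    by move=> t; move/ffunP: hn => /(_ t); rewrite ffunE.
  apply/andP; split.
    by apply/forallP => t; rewrite -ht leq_addl.
  by apply/eqP/ffunP => t; rewrite !ffunE -ht addnK subnK.
case H: (expo_le M e && (a == expo_add (expo_sub e M) [ffun t => Lf t])).
  move/andP: H => [hle /eqP ha]; rewrite hle ha eqxx muln1.
  have -> : [ffun t => expo_add (expo_sub e M) [ffun t => Lf t] t - Lf t + M t] == e.
    apply/eqP/ffunP => t; rewrite !ffunE addnK subnK //; exact: (forallP hle t).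
  by rewrite muln1; apply: eq_bigr => i _; rewrite !ffunE.
rewrite (_ : (if expo_le M e then _ else 0%N) = 0%N); last first.
  case: ifP => // hle; move: H; rewrite hle /= => ->; by rewrite muln0.
case hall: [forall i, Lf i <= a i]; last first.
  move/negbT/forallPn: hall => [i]; rewrite -ltnNge => hi.
  by rewrite (bigD1 i) //= ffact_small // mul0n.
case hn: ([ffun t => a t - Lf t + M t] == e); last by rewrite muln0.
by move: (key hn hall); rewrite H.
Qed.

Section Main.
Local Open Scope ring_scope.

Lemma coef_inv (T : scen r) : scen_coef T * ((\prod_ij (T.2 ij)`!)%N)%:R = 1 :> rat.
Proof.
rewrite /scen_coef natr_prod -big_split /= big1 // => ij _.
by rewrite mulVf // pnatr_eq0 -lt0n fact_gt0.
Qed.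

Lemma good_card (k : nat) (m : msp k r) (T : scen r) : is_scen T ->
  (#|[set J : {ffun {set 'I_k} -> 'I_r.+1} |
       good (fun S => (m S : nat)) (fun ij => (T.2 ij : nat)) J]|)%:R =
  ((\prod_i (exps_of m i) ^_ (scen_len T i))%N)%:R * scen_coef T :> rat.
Proof.
move=> /andP [/forallP hT _].
have hmu : forall i j : 'I_r, (i < j)%N -> (T.2 (i, j) : nat) = 0%N.
  by move=> i j hij; move: (hT i) => /forallP /(_ j) /implyP /(_ hij) /eqP.
have := @multi _ r' (fun S => (m S : nat)) (fun S => leq_ord (m S)) (fun ij => (T.2 ij : nat)) hmu.
move=> /(congr1 (fun n : nat => n%:R : rat)); rewrite natrM => h.
set G := (#|_|)%:R; set F := ((\prod_ij _)%N)%:R in h.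
have -> : G = G * (scen_coef T * F) by rewrite coef_inv mulr1.
rewrite [scen_coef T * F]mulrC mulrA h; congr (_ * _).
by congr (_%:R); apply: eq_bigr => i _; rewrite ffunE.
Qed.

Lemma P_sum (k : nat) (x : expo r) :
  P r k x = \sum_(m : msp k r | is_msp m) ((exps_of m == x : nat)%:R : rat).
Proof.
rewrite /P card_set_sum natr_sum [RHS]big_mkcond /=; apply: eq_bigr => m _.
by case: (is_msp m).
Qed.

Lemma main_step (k : nat) (e : expo r) : P r k.+1 e = Dop (P r k) e.
Proof.
have L1 : (#|[set m' : msp k.+1 r | is_msp m' && (exps_of m' == e)]| =
   \sum_(m : msp k r | is_msp m) \sum_(T : scen r | is_scen T)
     (#|[set J : {ffun {set 'I_k} -> 'I_r.+1} |
         good (fun S => (m S : nat)) (fun ij => (T.2 ij : nat)) J]| *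
      (newe m T == e)))%N.
  rewrite card_set_sum.
  transitivity (\sum_(m' : msp k.+1 r | is_msp m') (exps_of m' == e : nat))%N.
    by rewrite [RHS]big_mkcond; apply: eq_bigr => m' _; case: (is_msp m').
  rewrite (count_build (fun m' : msp k.+1 r => exps_of m' == e)) /=.
  rewrite (eq_bigl (fun p : msp k r * {ffun {set 'I_k} -> 'I_r.+1} =>
      is_msp p.1 && ([forall S, (p.2 S <= p.1 S)%N] && (sumJ p.2 <= r)%N))); last first.
    by move=> p; rewrite /inD andbA.
  transitivity (\sum_(m : msp k r | is_msp m)
      \sum_(J : {ffun {set 'I_k} -> 'I_r.+1} | [forall S, (J S <= m S)%N] && (sumJ J <= r)%N)
        (exps_of (build (m, J)) == e : nat))%N.
    by rewrite pair_big_dep.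
  apply: eq_bigr => m hm.
  rewrite (partition_big (fun J => prof (m, J)) (fun T => is_scen T)); last first.
    by move=> J hJ; apply: prof_scen; rewrite /inD /= hm.
  apply: eq_bigr => T hT.
  rewrite (eq_bigr (fun J => (newe m T == e : nat))); last first.
    by move=> J /andP [hJ /eqP <-]; rewrite exps_build // /inD /= hm.
  rewrite -(fiber_card hm hT) -sum_nat_const.
  by apply: eq_bigl => J; rewrite inE.
rewrite [in LHS]/P L1 natr_sum; under eq_bigr do rewrite natr_sum.
rewrite /Dop exchange_big /=.
apply: eq_bigr => T hT.
rewrite /PT /mulmono.
case: ifP => hle; last first.
  rewrite mulr0 big1 // => m hm.
  have := per_mT (exps_of m) (scen_mono T) e (scen_len T); rewrite hle => h.
  by rewrite natrM good_card // mulrAC -natrM /newe h mul0r.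
rewrite derivs_eq P_sum big_distrr big_distrr /=.
apply: eq_bigr => m hm.
have := per_mT (exps_of m) (scen_mono T) e (scen_len T); rewrite hle => h.
rewrite natrM good_card // mulrAC -[in LHS]natrM /newe.
by rewrite h natrM mulrC.
Qed.

End Main.

End Final.


Section Part2.
Local Open Scope ring_scope.
Lemma card_sub_pow n (A : {set {set 'I_n}}) : (#|A| <= 2 ^ n)%N.
Proof.
have -> : (2 ^ n = #|powerset [set: 'I_n]|)%N by rewrite card_powerset cardsT card_ord.
apply: subset_leq_card; apply/subsetP => S _; by rewrite powersetE subsetT.
Qed.

Lemma part2 n r : (#|[set m : msp n r | is_msp m]|)%:R = eval_ones n (P r n) :> rat.
Proof.
rewrite /eval_ones /P; under eq_bigr do rewrite card_set_sum.
rewrite -natr_sum card_set_sum exchange_big /=; congr (_%:R).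
apply: eq_bigr => m _.
case hm: (is_msp m) => /=; last by rewrite big1.
pose e0 : {ffun 'I_r -> 'I_(2 ^ n).+1} := [ffun t => inord (exps_of m t)].
have he0 : [ffun t => nat_of_ord (e0 t)] = exps_of m.
  apply/ffunP => t.  rewrite ffunE. rewrite /e0 ffunE inordK // ltnS /exps_of ffunE /a_i.
  exact: card_sub_pow.
rewrite (bigD1 e0) //= he0 eqxx big1 // => e ne.
case: eqP => // he; move/eqP: ne; case; apply/ffunP => t.
apply: val_inj; move/ffunP: he => /(_ t); rewrite -he0 ffunE [in RHS]ffunE => h.
exact: (esym h).
Qed.

End Part2.

Local Open Scope ring_scope.

Theorem mainTheorem2 (r : nat) : (0 < r)%N ->
  (forall n : nat, (0 < n)%N -> P r n =1 Dop (P r n.-1)) /\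
  (forall n : nat, (#|[set m : msp n r | is_msp m]|)%:R = eval_ones n (P r n) :> rat).
Proof.
case: r => // r' _; split.
  by case=> // k _ e; exact: main_step.
move=> n; exact: part2.
Qed.
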